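(* For every real $r\ge0$, the sphere $\{Y\in\mathcal{M}: d_{GH}(\Delta_1,Y)=r\}$ in the Gromov–Hausdorff space $\mathcal{M}$ is path connected (as a subspace of the metric space $(\mathcal{M},d_{GH})$).
   Context: $\mathcal{M}$ denotes the set of isometry classes of compact metric spaces endowed with the Gromov–Hausdorff distance $d_{GH}$ (a metric on $\mathcal{M}$): $d_{GH}(X,Y)$ is the infimum of $r$ such that there exist a metric space $Z$ and subsets $X',Y'\subset Z$ isometric to $X,Y$ with Hausdorff distance $d_H(X',Y')\le r$. $\Delta_1$ is the single-point metric space. *)

(* Defs.v *)
From Stdlib Require Import Reals Lra.
Open Scope R_scope.

Record MetricSpace := {
  mcarrier :> Type;
  mdist : mcarrier -> mcarrier -> R;
  mdist_eq0 : forall x y, mdist x y = 0 <-> x = y;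
  mdist_sym : forall x y, mdist x y = mdist y x;
  mdist_tri : forall x y z, mdist x z <= mdist x y + mdist y z
}.
Arguments mdist {m} _ _.

Definition compact_space (X : MetricSpace) : Prop :=
  forall u : nat -> X, exists phi : nat -> nat,
    (forall n, (phi n < phi (S n))%nat) /\
    exists l : X, forall eps, 0 < eps -> exists N, forall n, (N <= n)%nat ->
      mdist (u (phi n)) l < eps.

(** Nonempty compact metric spaces (the elements of M, up to isometry). *)
Record CMS := {
  cms_space :> MetricSpace;
  cms_inhabited : inhabited cms_space;
  cms_compact : compact_space cms_space
}.

Definition isometric_embedding {X Z : MetricSpace} (f : X -> Z) : Prop :=
  forall a b, mdist (f a) (f b) = mdist a b.

(** Isometry (equality in M). *)
Definition isometric (X Y : MetricSpace) : Prop :=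
  exists (f : X -> Y) (g : Y -> X),
    isometric_embedding f /\ (forall x, g (f x) = x) /\ (forall y, f (g y) = y).

(** d_H(A,B) <= r for A,B subsets of Z (unfolding sup/inf). *)
Definition hausdorff_le {Z : MetricSpace} (A B : Z -> Prop) (r : R) : Prop :=
  (forall a, A a -> forall eps, 0 < eps -> exists b, B b /\ mdist a b < r + eps) /\
  (forall b, B b -> forall eps, 0 < eps -> exists a, A a /\ mdist a b < r + eps).

Definition GH_admissible (X Y : MetricSpace) (r : R) : Prop :=
  exists (Z : MetricSpace) (f : X -> Z) (g : Y -> Z),
    isometric_embedding f /\ isometric_embedding g /\
    hausdorff_le (fun z => exists x, z = f x) (fun z => exists y, z = g y) r.

Definition is_glb (S : R -> Prop) (m : R) : Prop :=
  (forall r, S r -> m <= r) /\ (forall m', (forall r, S r -> m' <= r) -> m' <= m).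

Definition is_GH_dist (X Y : MetricSpace) (d : R) : Prop :=
  is_glb (GH_admissible X Y) d.

Definition unit_metric : MetricSpace.
Proof.
  refine {| mcarrier := unit; mdist := fun _ _ => 0 |}.
  - intros [] []; split; auto.
  - auto.
  - intros; lra.
Defined.

Lemma unit_compact : compact_space unit_metric.
Proof.
  intros u. exists (fun n => n). split; [intros; auto|].
  exists tt. intros eps He. exists O. intros n _. simpl. exact He.
Qed.

Definition Delta1 : CMS :=
  {| cms_space := unit_metric; cms_inhabited := inhabits tt;
     cms_compact := unit_compact |}.

Definition GH_path (S : CMS -> Prop) (X Y : CMS) : Prop :=
  exists gamma : R -> CMS,
    isometric (gamma 0) X /\ isometric (gamma 1) Y /\
    (forall t, 0 <= t <= 1 -> S (gamma t)) /\
    (forall t, 0 <= t <= 1 -> forall eps, 0 < eps -> exists delta, 0 < delta /\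
       forall s, 0 <= s <= 1 -> Rabs (s - t) < delta ->
         exists d, is_GH_dist (gamma s) (gamma t) d /\ d < eps).

(* Main.v *)
Require Import Defs.
From Stdlib Require Import Reals Lra Lia ClassicalEpsilon Classical.
Open Scope R_scope.

Lemma mdist_nonneg (X : MetricSpace) (p q : X) : 0 <= mdist p q.
Proof.
  pose proof (mdist_tri X p q p). rewrite (mdist_sym X q p) in H.
  assert (mdist p p = 0) by (apply (mdist_eq0 X); reflexivity). lra.
Qed.

Lemma mdist_refl (X : MetricSpace) (p : X) : mdist p p = 0.
Proof. apply (mdist_eq0 X); reflexivity. Qed.

Lemma le_eps (x y : R) : (forall e, 0 < e -> x <= y + e) -> x <= y.
Proof.
  intros H. destruct (Rle_dec x y) as [h|h]; auto.
  specialize (H ((x - y)/2)). lra.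
Qed.

Definition sum_dist (X Y : MetricSpace) (a b : R) (c : X -> Y -> R) (p q : X + Y) : R :=
  match p, q with
  | inl x, inl x' => a * mdist x x'
  | inr y, inr y' => b * mdist y y'
  | inl x, inr y => c x y
  | inr y, inl x => c x y
  end.

Definition sum_ok (X Y : MetricSpace) (a b : R) (c : X -> Y -> R) : Prop :=
  0 < a /\ 0 < b /\ (forall x y, 0 < c x y) /\
  (forall x x' y, c x y <= a * mdist x x' + c x' y) /\
  (forall x y y', c x y <= b * mdist y y' + c x y') /\
  (forall x x' y, a * mdist x x' <= c x y + c x' y) /\
  (forall x y y', b * mdist y y' <= c x y + c x y').

Lemma sum_eq0 X Y a b c (H : sum_ok X Y a b c) :
  forall p q, sum_dist X Y a b c p q = 0 <-> p = q.
Proof.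
  destruct H as [Ha [Hb [Hc _]]].
  intros [x|y] [x'|y']; simpl; split; intro E.
  - apply Rmult_integral in E. destruct E as [E|E]; [lra|].
    apply (mdist_eq0 X) in E. subst; reflexivity.
  - inversion E; subst. rewrite mdist_refl. ring.
  - specialize (Hc x y'). lra.
  - discriminate.
  - specialize (Hc x' y). lra.
  - discriminate.
  - apply Rmult_integral in E. destruct E as [E|E]; [lra|].
    apply (mdist_eq0 Y) in E. subst; reflexivity.
  - inversion E; subst. rewrite mdist_refl. ring.
Qed.

Lemma sum_sym X Y a b c : forall p q, sum_dist X Y a b c p q = sum_dist X Y a b c q p.
Proof.
  intros [x|y] [x'|y']; simpl; try reflexivity.
  - rewrite (mdist_sym X x x'); reflexivity.
  - rewrite (mdist_sym Y y y'); reflexivity.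
Qed.

Lemma sum_tri X Y a b c (H : sum_ok X Y a b c) :
  forall p q z, sum_dist X Y a b c p z <= sum_dist X Y a b c p q + sum_dist X Y a b c q z.
Proof.
  destruct H as [Ha [Hb [Hc [H1 [H2 [H3 H4]]]]]].
  intros [x|y] [x'|y'] [x''|y'']; simpl.
  - pose proof (mdist_tri X x x' x''). nra.
  - apply H1.
  - apply H3.
  - rewrite Rplus_comm, (mdist_sym Y). apply H2.
  - rewrite Rplus_comm, (mdist_sym X). apply H1.
  - apply H4.
  - apply H2.
  - pose proof (mdist_tri Y y y' y''). nra.
Qed.

Definition mk_sum X Y a b c (H : sum_ok X Y a b c) : MetricSpace :=
  {| mcarrier := (X + Y)%type; mdist := sum_dist X Y a b c;
     mdist_eq0 := sum_eq0 X Y a b c H; mdist_sym := sum_sym X Y a b c;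
     mdist_tri := sum_tri X Y a b c H |}.

Lemma strict_mono (f : nat -> nat) : (forall n, (f n < f (S n))%nat) ->
  forall m n, (m < n)%nat -> (f m < f n)%nat.
Proof.
  intros Hf m n. induction n; intros Hmn; [lia|].
  destruct (Nat.eq_dec m n) as [->|Hne]; [apply Hf|].
  specialize (IHn ltac:(lia)). specialize (Hf n). lia.
Qed.

Lemma extract (P : nat -> Prop) : (forall N, exists n, (N <= n)%nat /\ P n) ->
  exists psi : nat -> nat, (forall n, (psi n < psi (S n))%nat) /\ forall n, P (psi n).
Proof.
  intros H.
  pose (next := fun N => proj1_sig (constructive_indefinite_description _ (H N))).
  assert (Hn : forall N, (N <= next N)%nat /\ P (next N)).
  { intros N. unfold next. destruct (constructive_indefinite_description _ (H N)); simpl; auto. }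
  exists (fix psi n := match n with O => next O | S k => next (S (psi k)) end).
  split.
  - intros n. simpl. destruct (Hn (S ((fix psi (n : nat) : nat :=
      match n with O => next O | S k => next (S (psi k)) end) n))). lia.
  - intros [|n]; simpl; apply Hn.
Qed.

Lemma sum_compact X Y a b c (H : sum_ok X Y a b c) :
  inhabited X -> inhabited Y -> compact_space X -> compact_space Y ->
  compact_space (mk_sum X Y a b c H).
Proof.
  intros [x0] [y0] CX CY u.
  pose proof H as [Ha [Hb _]].
  destruct (classic (forall N, exists n, (N <= n)%nat /\ exists x, u n = inl x)) as [HL|HL].
  - destruct (extract _ HL) as [psi [Hpsi HP]].
    pose (v := fun k => match u (psi k) with inl x => x | inr _ => x0 end).
    destruct (CX v) as [phi [Hphi [l Hl]]].
    exists (fun n => psi (phi n)). split.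
    { intros n. apply strict_mono; auto. }
    exists (inl l). intros eps He.
    destruct (Hl (eps / a)) as [N HN]. { apply Rdiv_lt_0_compat; lra. }
    exists N; intros n Hn. specialize (HN n Hn). destruct (HP (phi n)) as [x Hx].
    unfold v in HN. rewrite Hx in HN |- *. simpl.
    apply (Rmult_lt_compat_l a) in HN; [|lra].
    replace (a * (eps / a)) with eps in HN by (field; lra). exact HN.
  - assert (HR : forall N, exists n, (N <= n)%nat /\ exists y, u n = inr y).
    { apply not_all_ex_not in HL. destruct HL as [N0 HN0].
      intros N. exists (Nat.max N N0). split; [lia|].
      destruct (u (Nat.max N N0)) as [x|y] eqn:E; [|eauto].
      exfalso. apply HN0. exists (Nat.max N N0). split; [lia|eauto]. }
    destruct (extract _ HR) as [psi [Hpsi HP]].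
    pose (v := fun k => match u (psi k) with inr y => y | inl _ => y0 end).
    destruct (CY v) as [phi [Hphi [l Hl]]].
    exists (fun n => psi (phi n)). split.
    { intros n. apply strict_mono; auto. }
    exists (inr l). intros eps He.
    destruct (Hl (eps / b)) as [N HN]. { apply Rdiv_lt_0_compat; lra. }
    exists N; intros n Hn. specialize (HN n Hn). destruct (HP (phi n)) as [y Hy].
    unfold v in HN. rewrite Hy in HN |- *. simpl.
    apply (Rmult_lt_compat_l b) in HN; [|lra].
    replace (b * (eps / b)) with eps in HN by (field; lra). exact HN.
Qed.

Lemma adm_sym (X Y : MetricSpace) s : GH_admissible X Y s -> GH_admissible Y X s.
Proof.
  intros [Z [f [g [Hf [Hg [H1 H2]]]]]].
  exists Z, g, f. split; [auto|split; [auto|split]].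
  - intros a Ha e He. destruct (H2 a Ha e He) as [b [Hb Hd]]. exists b. split; auto.
    rewrite mdist_sym. auto.
  - intros b Hb e He. destruct (H1 b Hb e He) as [a [Ha Hd]]. exists a. split; auto.
    rewrite mdist_sym. auto.
Qed.

Lemma adm_nonneg (X Y : MetricSpace) s : inhabited X -> GH_admissible X Y s -> 0 <= s.
Proof.
  intros [x0] [Z [f [g [Hf [Hg [H1 H2]]]]]].
  apply le_eps. intros e He.
  destruct (H1 (f x0) (ex_intro _ x0 eq_refl) e He) as [b [_ Hb]].
  pose proof (mdist_nonneg Z (f x0) b). lra.
Qed.

Lemma gh_exists (X Y : MetricSpace) s : inhabited X -> GH_admissible X Y s ->
  exists d, is_GH_dist X Y d /\ d <= s.
Proof.
  intros HX Hs.
  pose (E := fun m => forall s', GH_admissible X Y s' -> m <= s').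
  destruct (completeness E) as [l [Hub Hl]].
  - exists s. intros m Hm. apply Hm, Hs.
  - exists 0. intros s' H. eapply adm_nonneg; eauto.
  - exists l. split.
    + split.
      * intros r Hr. apply Hl. intros m Hm. apply Hm, Hr.
      * intros m' Hm'. apply Hub. exact Hm'.
    + apply Hl. intros m Hm. apply Hm, Hs.
Qed.

Lemma close_dist (X Y : CMS) δ eps : GH_admissible X Y δ -> δ < eps ->
  exists d, is_GH_dist X Y d /\ d < eps.
Proof.
  intros H Hd. destruct (gh_exists X Y δ (cms_inhabited X) H) as [d [Hd1 Hd2]].
  exists d. split; auto. lra.
Qed.

Lemma adm_embed (X W : MetricSpace) (f : X -> W) δ : isometric_embedding f -> 0 <= δ ->
  (forall w, exists x, mdist (f x) w <= δ) -> GH_admissible X W δ.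
Proof.
  intros Hf Hd Hw. exists W, f, (fun w => w). split; [auto|split].
  - intros p q; reflexivity.
  - split.
    + intros a [x ->] e He. exists (f x). split; [eauto|]. rewrite mdist_refl. lra.
    + intros b [y ->] e He. destruct (Hw y) as [x Hx]. exists (f x). split; [eauto|lra].
Qed.

Lemma adm_mono (M1 M2 : MetricSpace) (h : M1 -> M2) (k : M2 -> M1) δ :
  (forall p, k (h p) = p) -> (forall q, h (k q) = q) -> 0 < δ ->
  (forall p q, mdist p q <= mdist (h p) (h q) <= mdist p q + δ) ->
  GH_admissible M1 M2 δ.
Proof.
  intros hk kh Hd Hb.
  assert (Hok : sum_ok M1 M2 1 1 (fun p q => δ + mdist p (k q))).
  { repeat split; try lra.
    - intros. pose proof (mdist_nonneg _ x (k y)). lra.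
    - intros x x' y. pose proof (mdist_tri _ x x' (k y)). lra.
    - intros x y y'. pose proof (mdist_tri _ x (k y') (k y)).
      destruct (Hb (k y') (k y)) as [Hb1 _]. rewrite !kh in Hb1.
      rewrite (mdist_sym M2 y y'). lra.
    - intros x x' y. pose proof (mdist_tri _ x (k y) x'). rewrite (mdist_sym _ (k y) x') in H. lra.
    - intros x y y'. destruct (Hb (k y) (k y')) as [_ Hb2]. rewrite !kh in Hb2.
      pose proof (mdist_tri _ (k y) x (k y')). rewrite (mdist_sym _ (k y) x) in H. lra. }
  exists (mk_sum M1 M2 1 1 _ Hok), inl, inr. split; [|split].
  - intros p q. simpl. ring.
  - intros p q. simpl. ring.
  - split.
    + intros a [x ->] e He. exists (inr (h x)). split; [eauto|]. simpl.
      rewrite hk, mdist_refl. lra.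
    + intros b [y ->] e He. exists (inl (k y)). split; [eauto|]. simpl.
      rewrite mdist_refl. lra.
Qed.

Definition diam_is (W : MetricSpace) r :=
  (forall p q : W, mdist p q <= 2 * r) /\
  (forall e, 0 < e -> exists p q : W, 2 * r - e < mdist p q).

Lemma adm_lower (W : MetricSpace) s : GH_admissible Delta1 W s ->
  forall p q : W, mdist p q <= 2 * s.
Proof.
  intros [Z [f [g [Hf [Hg [H1 H2]]]]]] p q.
  apply le_eps. intros e He.
  destruct (H2 (g p) (ex_intro _ p eq_refl) (e/2) ltac:(lra)) as [a [[t1 ->] Ha]].
  destruct (H2 (g q) (ex_intro _ q eq_refl) (e/2) ltac:(lra)) as [a' [[t2 ->] Ha']].
  rewrite <- (Hg p q).
  pose proof (mdist_tri Z (g p) (f t1) (g q)).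
  pose proof (mdist_tri Z (f t1) (f t2) (g q)).
  rewrite (Hf t1 t2) in H0. simpl in H0.
  rewrite (mdist_sym Z (g p) (f t1)) in H. lra.
Qed.

Lemma adm_upper (W : MetricSpace) s : inhabited W -> 0 < s ->
  (forall p q : W, mdist p q <= 2 * s) -> GH_admissible Delta1 W s.
Proof.
  intros [w0] Hs Hb.
  assert (Hok : sum_ok unit_metric W 1 1 (fun _ _ => s)).
  { repeat split; simpl; intros; try lra. - pose proof (mdist_nonneg W y y'). lra.
    - specialize (Hb y y'). lra. }
  exists (mk_sum _ _ 1 1 _ Hok), inl, inr. split; [|split].
  - intros p q. simpl. ring.
  - intros p q. simpl. ring.
  - split.
    + intros a [x ->] e He. exists (inr w0). split; [eauto|]. simpl. lra.
    + intros b [y ->] e He. exists (inl tt). split; [eauto|]. simpl. lra.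
Qed.

Lemma char_fwd (W : MetricSpace) r : inhabited W -> is_GH_dist Delta1 W r -> diam_is W r.
Proof.
  intros HW [Hlow Hgr]. split.
  - intros p q. assert (mdist p q / 2 <= r).
    { apply Hgr. intros s Hs. pose proof (adm_lower W s Hs p q). lra. }
    lra.
  - intros e He. apply NNPP. intros Hn.
    assert (Hall : forall p q : W, mdist p q <= 2 * r - e).
    { intros p q. apply Rnot_lt_le. intros Hlt. apply Hn. eauto. }
    destruct (Rlt_dec 0 (r - e/4)) as [Hp|Hp].
    + assert (r <= r - e/4); [|lra].
      apply Hlow. apply adm_upper; auto. intros p q. specialize (Hall p q). lra.
    + destruct HW as [w0]. apply Hn. exists w0, w0. rewrite mdist_refl. lra.
Qed.

Lemma char_bwd (W : MetricSpace) r : inhabited W -> 0 <= r -> diam_is W r ->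
  is_GH_dist Delta1 W r.
Proof.
  intros HW Hr [Hb Ha]. split.
  - intros s Hs. apply le_eps. intros e He.
    destruct (Ha (2*e) ltac:(lra)) as [p [q Hpq]].
    pose proof (adm_lower W s Hs p q). lra.
  - intros m Hm. apply le_eps. intros e He. apply Hm. apply adm_upper; auto; [lra|].
    intros p q. specialize (Hb p q). lra.
Qed.

Definition cross (X Y : MetricSpace) (x0 : X) (y0 : Y) (r a b : R) : X -> Y -> R :=
  fun x y => Rmin (2 * r) (a * mdist x x0 + b * mdist y y0 + Rmin a b * r).

Lemma min_shift K A A' e : 0 <= e -> A <= e + A' -> Rmin K A <= e + Rmin K A'.
Proof. intros. unfold Rmin; destruct (Rle_dec K A); destruct (Rle_dec K A'); lra. Qed.

Lemma min_mono K A A' d : A <= A' -> A' <= A + d -> 0 <= d ->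
  Rmin K A <= Rmin K A' <= Rmin K A + d.
Proof. intros. unfold Rmin; destruct (Rle_dec K A); destruct (Rle_dec K A'); lra. Qed.

Lemma min_sum K A B v : 0 <= A -> 0 <= B -> v <= K -> 0 <= K -> v <= A + B ->
  v <= Rmin K A + Rmin K B.
Proof. intros. unfold Rmin; destruct (Rle_dec K A); destruct (Rle_dec K B); lra. Qed.

Lemma W_ok (X Y : MetricSpace) x0 y0 r a b : 0 < r ->
  (forall p q : X, mdist p q <= 2 * r) -> (forall p q : Y, mdist p q <= 2 * r) ->
  0 < a -> a <= 1 -> 0 < b -> b <= 1 -> sum_ok X Y a b (cross X Y x0 y0 r a b).
Proof.
  intros Hr HX HY Ha Ha1 Hb Hb1. unfold cross.
  assert (Hm : 0 < Rmin a b) by (apply Rmin_glb_lt; lra).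
  repeat split; auto.
  - intros x y. apply Rmin_glb_lt; [lra|].
    pose proof (mdist_nonneg _ x x0). pose proof (mdist_nonneg _ y y0). nra.
  - intros x x' y. apply min_shift.
    + pose proof (mdist_nonneg _ x x'). nra.
    + pose proof (mdist_tri _ x x' x0). nra.
  - intros x y y'. apply min_shift.
    + pose proof (mdist_nonneg _ y y'). nra.
    + pose proof (mdist_tri _ y y' y0). apply (Rmult_le_compat_l b) in H; lra.
  - intros x x' y. pose proof (mdist_nonneg _ x x0). pose proof (mdist_nonneg _ x' x0).
    pose proof (mdist_nonneg _ y y0). pose proof (mdist_nonneg _ x x').
    pose proof (HX x x'). pose proof (mdist_tri _ x x0 x') as T. rewrite (mdist_sym _ x0 x') in T.
    apply min_sum; nra.
  - intros x y y'. pose proof (mdist_nonneg _ y y0). pose proof (mdist_nonneg _ y' y0).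
    pose proof (mdist_nonneg _ x x0). pose proof (mdist_nonneg _ y y').
    pose proof (HY y y'). pose proof (mdist_tri _ y y0 y') as T. rewrite (mdist_sym _ y0 y') in T.
    apply min_sum; nra.
Qed.

Definition Wsp (X Y : CMS) (x0 : X) (y0 : Y) r a b
  (H : sum_ok X Y a b (cross X Y x0 y0 r a b)) : CMS :=
  {| cms_space := mk_sum X Y a b _ H; cms_inhabited := inhabits (inl x0);
     cms_compact := sum_compact X Y a b _ H (cms_inhabited X) (cms_inhabited Y)
                      (cms_compact X) (cms_compact Y) |}.

Lemma W_diam (X Y : CMS) x0 y0 r a b H : 0 < r -> diam_is X r -> diam_is Y r ->
  a <= 1 -> b <= 1 -> (a = 1 \/ b = 1) -> diam_is (Wsp X Y x0 y0 r a b H) r.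
Proof.
  intros Hr [HX HXa] [HY HYa] Ha1 Hb1 Hab. pose proof H as [Ha [Hb _]]. split.
  - intros [x|y] [x'|y']; simpl; unfold cross.
    + pose proof (HX x x'). pose proof (mdist_nonneg _ x x'). nra.
    + apply Rmin_l.
    + apply Rmin_l.
    + pose proof (HY y y'). pose proof (mdist_nonneg _ y y'). nra.
  - intros e He. destruct Hab as [E|E].
    + destruct (HXa e He) as [p [q Hpq]]. exists (inl p), (inl q). simpl. rewrite E. lra.
    + destruct (HYa e He) as [p [q Hpq]]. exists (inr p), (inr q). simpl. rewrite E. lra.
Qed.

Lemma W_close (X Y : CMS) x0 y0 r a b a' b' H H' δ : 0 < r ->
  (forall p q : X, mdist p q <= 2 * r) -> (forall p q : Y, mdist p q <= 2 * r) ->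
  a <= a' -> b <= b' -> 0 < δ -> 3 * r * ((a' - a) + (b' - b)) <= δ ->
  GH_admissible (Wsp X Y x0 y0 r a b H) (Wsp X Y x0 y0 r a' b' H') δ.
Proof.
  intros Hr HX HY Haa Hbb Hd Hδ. pose proof H as [Ha [Hb _]]. pose proof H' as [Ha' [Hb' _]].
  apply (adm_mono (Wsp X Y x0 y0 r a b H) (Wsp X Y x0 y0 r a' b' H') (fun p : (X + Y)%type => p) (fun p : (X + Y)%type => p)); auto.
  assert (Hm1 : Rmin a b <= Rmin a' b') by (unfold Rmin; destruct (Rle_dec a b); destruct (Rle_dec a' b'); lra).
  assert (Hm2 : Rmin a' b' - Rmin a b <= (a' - a) + (b' - b)) by (unfold Rmin; destruct (Rle_dec a b); destruct (Rle_dec a' b'); lra).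
  intros [x|y] [x'|y']; simpl; unfold cross.
  - pose proof (HX x x'). pose proof (mdist_nonneg _ x x'). split; nra.
  - pose proof (HX x x0). pose proof (mdist_nonneg _ x x0).
    pose proof (HY y' y0). pose proof (mdist_nonneg _ y' y0).
    set (A := a * mdist x x0 + b * mdist y' y0 + Rmin a b * r).
    set (A' := a' * mdist x x0 + b' * mdist y' y0 + Rmin a' b' * r).
    assert (A <= A') by (unfold A, A'; nra).
    assert (A' <= A + δ) by (unfold A, A'; nra).
    apply min_mono; lra.
  - pose proof (HX x' x0). pose proof (mdist_nonneg _ x' x0).
    pose proof (HY y y0). pose proof (mdist_nonneg _ y y0).
    set (A := a * mdist x' x0 + b * mdist y y0 + Rmin a b * r).
    set (A' := a' * mdist x' x0 + b' * mdist y y0 + Rmin a' b' * r).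
    assert (A <= A') by (unfold A, A'; nra).
    assert (A' <= A + δ) by (unfold A, A'; nra).
    apply min_mono; lra.
  - pose proof (HY y y'). pose proof (mdist_nonneg _ y y'). split; nra.
Qed.

Lemma W_embX (X Y : CMS) x0 y0 r a b H : 0 < r ->
  (forall p q : Y, mdist p q <= 2 * r) -> a = 1 ->
  GH_admissible X (Wsp X Y x0 y0 r a b H) (3 * r * b).
Proof.
  intros Hr HY Ea. pose proof H as [Ha [Hb _]].
  apply (adm_embed X (Wsp X Y x0 y0 r a b H) (fun x : X => (inl x : X + Y))%type).
  - intros p q. simpl. rewrite Ea. ring.
  - nra.
  - intros [x|y].
    + exists x. simpl. rewrite mdist_refl. nra.
    + exists x0. simpl. unfold cross. rewrite mdist_refl.
      pose proof (HY y y0). pose proof (mdist_nonneg _ y y0).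
      assert (Rmin a b <= b) by apply Rmin_r.
      eapply Rle_trans; [apply Rmin_r|]. nra.
Qed.

Lemma W_embY (X Y : CMS) x0 y0 r a b H : 0 < r ->
  (forall p q : X, mdist p q <= 2 * r) -> b = 1 ->
  GH_admissible Y (Wsp X Y x0 y0 r a b H) (3 * r * a).
Proof.
  intros Hr HX Eb. pose proof H as [Ha [Hb _]].
  apply (adm_embed Y (Wsp X Y x0 y0 r a b H) (fun y : Y => (inr y : X + Y))%type).
  - intros p q. simpl. rewrite Eb. ring.
  - nra.
  - intros [x|y].
    + exists y0. simpl. unfold cross. rewrite mdist_refl.
      pose proof (HX x x0). pose proof (mdist_nonneg _ x x0).
      assert (Rmin a b <= a) by apply Rmin_l.
      eapply Rle_trans; [apply Rmin_r|]. nra.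
    + exists y. simpl. rewrite mdist_refl. nra.
Qed.

Definition at_ t := Rmin 1 (3 - 3 * t).
Definition bt_ t := Rmin 1 (3 * t).

Lemma ab_props t : ~ t <= 0 -> ~ 1 <= t ->
  0 < at_ t <= 1 /\ 0 < bt_ t <= 1 /\ (at_ t = 1 \/ bt_ t = 1).
Proof.
  intros. unfold at_, bt_, Rmin. destruct (Rle_dec 1 (3 - 3*t)); destruct (Rle_dec 1 (3*t)); lra.
Qed.



Lemma ab_cmp s t : 0 < s < 1 -> 0 < t < 1 -> - (1/6) < s - t < 1/6 ->
  (at_ s <= at_ t /\ bt_ s <= bt_ t /\ (at_ t - at_ s) + (bt_ t - bt_ s) <= 3 * Rabs (s - t)) \/
  (at_ t <= at_ s /\ bt_ t <= bt_ s /\ (at_ s - at_ t) + (bt_ s - bt_ t) <= 3 * Rabs (s - t)).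
Proof.
  intros. unfold at_, bt_, Rmin, Rabs.
  destruct (Rcase_abs (s - t));
  destruct (Rle_dec 1 (3 - 3*t)); destruct (Rle_dec 1 (3*t));
  destruct (Rle_dec 1 (3 - 3*s)); destruct (Rle_dec 1 (3*s)); lra.
Qed.

Lemma Wok_t (X Y : CMS) x0 y0 r t : 0 < r ->
  (forall p q : X, mdist p q <= 2 * r) -> (forall p q : Y, mdist p q <= 2 * r) ->
  ~ t <= 0 -> ~ 1 <= t -> sum_ok X Y (at_ t) (bt_ t) (cross X Y x0 y0 r (at_ t) (bt_ t)).
Proof.
  intros Hr HX HY h0 h1. destruct (ab_props t h0 h1) as [[? ?] [[? ?] _]].
  apply W_ok; auto.
Qed.

Lemma iso_refl (X : MetricSpace) : isometric X X.
Proof. exists (fun x => x), (fun x => x). repeat split; intros; reflexivity. Qed.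

Lemma self_close (X : CMS) eps : 0 < eps -> exists d, is_GH_dist X X d /\ d < eps.
Proof.
  intros He. apply (close_dist X X (eps/2)); [|lra].
  apply (adm_embed X X (fun x => x)); [intros p q; reflexivity|lra|].
  intros w. exists w. rewrite mdist_refl. lra.
Qed.

Theorem corollary2 (r : R) (hr : 0 <= r) :
  (exists X : CMS, is_GH_dist Delta1 X r) /\
  (forall X Y : CMS, is_GH_dist Delta1 X r -> is_GH_dist Delta1 Y r ->
     GH_path (fun W => is_GH_dist Delta1 W r) X Y).
Proof.
  split.
  - destruct (Req_dec r 0) as [E|Hr].
    + subst r. exists Delta1. apply char_bwd; [exact (inhabits tt)|lra|].
      split; simpl; intros; [lra|]. exists tt, tt. lra.
    + assert (Hok : sum_ok unit_metric unit_metric 1 1 (fun _ _ => 2 * r)).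
      { repeat split; simpl; intros; lra. }
      exists {| cms_space := mk_sum _ _ 1 1 _ Hok; cms_inhabited := inhabits (inl tt);
                cms_compact := sum_compact _ _ 1 1 _ Hok (inhabits tt) (inhabits tt)
                                 unit_compact unit_compact |}.
      apply char_bwd; [exact (inhabits (inl tt))|lra|]. split.
      * intros [[]|[]] [[]|[]]; simpl; lra.
      * intros e He. exists (inl tt), (inr tt). simpl. lra.
  - intros X Y HXd HYd.
    destruct (char_fwd X r (cms_inhabited X) HXd) as [HXb HXa].
    destruct (char_fwd Y r (cms_inhabited Y) HYd) as [HYb HYa].
    destruct (cms_inhabited X) as [x0]. destruct (cms_inhabited Y) as [y0].
    destruct (Req_dec r 0) as [E|Hr0].
    + subst r. exists (fun _ => X). split; [apply iso_refl|split; [|split]].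
      * exists (fun _ => y0), (fun _ => x0). split; [|split].
        -- intros p q. rewrite mdist_refl. pose proof (HXb p q). pose proof (mdist_nonneg _ p q). lra.
        -- intros x. apply (mdist_eq0 X). pose proof (HXb x0 x). pose proof (mdist_nonneg _ x0 x). lra.
        -- intros y. apply (mdist_eq0 Y). pose proof (HYb y0 y). pose proof (mdist_nonneg _ y0 y). lra.
      * intros; auto.
      * intros t Ht eps He. exists 1. split; [lra|]. intros. apply self_close; auto.
    + assert (Hr : 0 < r) by lra.
      exists (fun t => match Rle_dec t 0 with
                       | left _ => X
                       | right h0 => match Rle_dec 1 t with
                                     | left _ => Y
                                     | right h1 => Wsp X Y x0 y0 r (at_ t) (bt_ t)
                                                     (Wok_t X Y x0 y0 r t Hr HXb HYb h0 h1)
                                     end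
                       end).
      split; [|split; [|split]].
      * cbv beta. destruct (Rle_dec 0 0) as [_|n]; [apply iso_refl|exfalso; apply n; lra].
      * cbv beta. destruct (Rle_dec 1 0) as [n|n0]; [exfalso; lra|]. destruct (Rle_dec 1 1) as [m|m]; [apply iso_refl|exfalso; apply m; lra].
      * intros t Ht. cbv beta. destruct (Rle_dec t 0); [auto|]. destruct (Rle_dec 1 t); [auto|].
        destruct (ab_props t n n0) as [[? ?] [[? ?] ?]].
        apply char_bwd; [apply cms_inhabited|lra|].
        apply W_diam; auto; split; auto.
      * intros t Ht eps He.
        destruct (Rle_dec t 0) as [ht0|ht0].
        { assert (t = 0) by lra. subst t.
          pose (dc := Rmin (1/6) (eps / (20 * r))).
          assert (Hdc : 0 < dc) by (apply Rmin_glb_lt; [lra|apply Rdiv_lt_0_compat; lra]).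
          assert (Hdc1 : dc <= 1/6) by apply Rmin_l.
          assert (Hdc2 : dc <= eps / (20 * r)) by apply Rmin_r.
          exists dc. split; auto. intros s Hs Hst. apply Rabs_def2 in Hst.
          destruct (Rle_dec s 0) as [hs0|hs0]; [apply self_close; auto|].
          destruct (Rle_dec 1 s) as [hs1|hs1]; [lra|].
          apply (close_dist _ _ (3 * r * bt_ s)).
          - apply adm_sym. apply W_embX; auto.
            unfold at_, Rmin. destruct (Rle_dec 1 (3 - 3*s)); lra.
          - assert (bt_ s <= 3 * s) by apply Rmin_r.
            assert (eps / (20 * r) * (20 * r) = eps) by (field; lra).
            nra. }
        destruct (Rle_dec 1 t) as [ht1|ht1].
        { assert (t = 1) by lra. subst t.
          pose (dc := Rmin (1/6) (eps / (20 * r))).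
          assert (Hdc : 0 < dc) by (apply Rmin_glb_lt; [lra|apply Rdiv_lt_0_compat; lra]).
          assert (Hdc1 : dc <= 1/6) by apply Rmin_l.
          assert (Hdc2 : dc <= eps / (20 * r)) by apply Rmin_r.
          exists dc. split; auto. intros s Hs Hst. apply Rabs_def2 in Hst.
          destruct (Rle_dec s 0) as [hs0|hs0]; [lra|].
          destruct (Rle_dec 1 s) as [hs1|hs1]; [apply self_close; auto|].
          apply (close_dist _ _ (3 * r * at_ s)).
          - apply adm_sym. apply W_embY; auto.
            unfold bt_, Rmin. destruct (Rle_dec 1 (3*s)); lra.
          - assert (at_ s <= 3 - 3 * s) by apply Rmin_r.
            assert (eps / (20 * r) * (20 * r) = eps) by (field; lra).
            nra. }
        pose (dc := Rmin (1/6) (Rmin (t/2) (Rmin ((1-t)/2) (eps / (40 * r))))).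
        assert (Hdc : 0 < dc).
        { repeat apply Rmin_glb_lt; try lra. apply Rdiv_lt_0_compat; lra. }
        assert (Hdc1 : dc <= 1/6) by apply Rmin_l.
        assert (Hdc2 : dc <= t/2) by (eapply Rle_trans; [apply Rmin_r|apply Rmin_l]).
        assert (Hdc3 : dc <= (1-t)/2) by
          (eapply Rle_trans; [apply Rmin_r|eapply Rle_trans; [apply Rmin_r|apply Rmin_l]]).
        assert (Hdc4 : dc <= eps / (40 * r)) by
          (eapply Rle_trans; [apply Rmin_r|eapply Rle_trans; [apply Rmin_r|apply Rmin_r]]).
        exists dc. split; auto. intros s Hs Hst. pose proof Hst as Hst'. apply Rabs_def2 in Hst.
        destruct (Rle_dec s 0) as [hs0|hs0]; [lra|].
        destruct (Rle_dec 1 s) as [hs1|hs1]; [lra|].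
        assert (E40 : eps / (40 * r) * (40 * r) = eps) by (field; lra).
        assert (Hd18 : 0 < 18 * r * dc) by nra.
        destruct (ab_cmp s t ltac:(lra) ltac:(lra) ltac:(lra)) as [[Ha [Hb Hs3]]|[Ha [Hb Hs3]]].
        -- apply (close_dist _ _ (18 * r * dc)); [|nra].
           apply W_close; auto. nra.
        -- apply (close_dist _ _ (18 * r * dc)); [|nra].
           apply adm_sym. apply W_close; auto. nra.
Qed.
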